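(* Let $n\ge1$ and let $\mathbf{k}:\mathbb{R}^{2n}\to\mathbb{R}$ be a continuous function such that there is a continuous $\tilde{\mathbf{k}}:\mathbb{R}^n\to\mathbb{R}$ with $\mathbf{k}(x,y)=\tilde{\mathbf{k}}(x-y)$ for all $x,y\in\mathbb{R}^n$. Let $\Omega_S$ be the set of all real $2\times 2n$ matrices of the form $A=\begin{bmatrix} w & 0\\ 0 & -w\end{bmatrix}$, $w\in\mathbb{R}^n$, and \[ \mathcal{M}(\Omega_S)=\operatorname{span}\{\,z\mapsto g(Az):\ A\in\Omega_S,\ g\in C(\mathbb{R}^2,\mathbb{R})\,\},\qquad z\in\mathbb{R}^{2n}. \] Then $\mathbf{k}$ belongs to the closure of $\mathcal{M}(\Omega_S)$ in $C(\mathbb{R}^{2n},\mathbb{R})$ with the topology of uniform convergence on compact sets. In addition, if $\mathbf{k}$ is symmetric, i.e. $\mathbf{k}(x,y)=\mathbf{k}(y,x)$ for all $x,y$, then for every compact set $K\subset\mathbb{R}^{2n}$ and every $\epsilon>0$ there exist positive integers $M_1,M_2$, coefficients $c_j\in\mathbb{R}$, vectors $w_j\in\mathbb{R}^n$ ($j=1,\dots,M_1$) and numbers $t_k\in\mathbb{R}$ ($k=1,\dots,M_2$) such that for all $(x,y)\in K$ \[ \Big|\mathbf{k}(x,y)-\sum_{j=1}^{M_1}\sum_{k=1}^{M_2}\frac{c_j}{M_2}\cos(\langle w_j,x\rangle+t_k)\cos(\langle w_j,y\rangle+t_k)\Big|<\epsilon. \]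
   Context: $\langle\cdot,\cdot\rangle$ is the standard inner product on $\mathbb{R}^n$. *)

(* Defs.v *)
(* R : realType, R^m rendered as column vectors 'cV[R]_m
   with the (product) topology of matrix_topology. *)
From HB Require Import structures.
From mathcomp Require Import all_boot all_order all_algebra.
From mathcomp Require Import all_classical all_reals all_analysis.
Set Implicit Arguments. Unset Strict Implicit. Unset Printing Implicit Defensive.
Import Order.TTheory GRing.Theory Num.Theory.
Import numFieldNormedType.Exports.
Local Open Scope classical_set_scope.
Local Open Scope ring_scope.

Definition dotv (R : realType) (n : nat) (u v : 'cV[R]_n) : R :=
  \sum_(i < n) u i ord0 * v i ord0.

Definition OmegaS_mx (R : realType) (n : nat) (w : 'cV[R]_n) : 'M[R]_(1 + 1, n + n) :=
  block_mx w^T 0 0 (- w^T).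

Definition OmegaS (R : realType) (n : nat) : set 'M[R]_(1 + 1, n + n) :=
  [set A | exists w : 'cV[R]_n, A = OmegaS_mx w].

Definition M_OmegaS (R : realType) (n : nat) : set ('cV[R]_(n + n) -> R) :=
  [set f | exists (m : nat) (c : 'I_m -> R) (A : 'I_m -> 'M[R]_(1 + 1, n + n))
             (g : 'I_m -> 'cV[R]_(1 + 1) -> R),
       (forall i, @OmegaS R n (A i)) /\ (forall i, continuous (g i)) /\
       f = (fun z => \sum_(i < m) c i * g i (A i *m z))].

(* closure in C(R^m, R) for the topology of uniform convergence on compacts:
   every basic neighbourhood {f | sup_K |k - f| < eps} of k meets S *)
Definition in_compact_closure (R : realType) (m : nat)
    (S : set ('cV[R]_m -> R)) (k : 'cV[R]_m -> R) : Prop :=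
  forall (K : set 'cV[R]_m) (eps : R), compact K -> 0 < eps ->
    exists f, S f /\ forall z, K z -> `|k z - f z| < eps.

(* Main.v *)
Require Import Defs.
From HB Require Import structures.
From mathcomp Require Import all_boot all_order all_algebra finmap.
From mathcomp Require Import all_classical all_reals all_analysis.
From mathcomp Require Import ring lra.
Set Implicit Arguments. Unset Strict Implicit. Unset Printing Implicit Defensive.
Import Order.TTheory GRing.Theory Num.Theory.
Import numFieldNormedType.Exports.
Local Open Scope classical_set_scope.
Local Open Scope ring_scope.


Section SqrtApprox.
Variable R : realType.

Fixpoint qs (k : nat) : {poly R} :=
  match k with
  | 0 => 0
  | k'.+1 => qs k' + ('X^2 - qs k' ^+ 2) * (2^-1)%:P
  end.

Lemma qs_bound k (t a : R) : a = `|t| -> a <= 1 ->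
  0 <= a - (qs k).[t] <= a /\ (a - (qs k).[t]) * (1 + k%:R * a / 2) <= a.
Proof.
move=> ta t1.
have a0 : 0 <= a by rewrite ta normr_ge0.
have a2 : t ^+ 2 = a ^+ 2 by rewrite ta real_normK // num_real.
elim: k => [|k [/andP [e0 ea] ek]].
  by rewrite /= horner0 subr0 mul0r mul0r addr0 mulr1 lexx a0.
rewrite -/(qs k.+1) /= !(hornerE, horner_exp) a2.
move: e0 ea ek; set q := (qs k).[t] => e0 ea ek.
have -> : a - (q + (a ^+ 2 - q ^+ 2) * 2^-1) = (a - q) * (1 - a + (a - q)/2).
  by field.
move: e0 ea ek; set e := a - q => e0 ea ek.
have h1 : 0 <= 1 - a + e / 2 by lra.
have h2 : 1 - a + e / 2 <= 1 - a / 2 by lra.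
split.
  apply/andP; split; first exact: mulr_ge0.
  have : e * (1 - a + e / 2) <= e * 1 by apply: ler_wpM2l => //; lra.
  lra.
have -> : k.+1%:R = k%:R + 1 :> R by rewrite -natr1.
have : e * (1 - a + e / 2) * (1 + (k%:R + 1) * a / 2) <=
       e * (1 - a / 2) * (1 + (k%:R + 1) * a / 2).
  apply: ler_wpM2r; first by have := ler0n R k; nra.
  by apply: ler_wpM2l.
have : (1 - a / 2) * (1 + (k%:R + 1) * a / 2) <= 1 + k%:R * a / 2.
  have := ler0n R k; nra.
move=> h3 h4.
have : e * ((1 - a / 2) * (1 + (k%:R + 1) * a / 2)) <= e * (1 + k%:R * a / 2).
  exact: ler_wpM2l.
rewrite mulrA => h5.
exact: le_trans h4 (le_trans h5 ek).
Qed.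

Lemma qs_err k (t : R) : `|t| <= 1 -> `| `|t| - (qs k).[t] | * k%:R <= 2.
Proof.
move=> t1; have [/andP [e0 ea] ek] := qs_bound k (erefl `|t|) t1.
rewrite ger0_norm //.
have := ler0n R k; have := normr_ge0 t.
move: e0 ea ek t1; set e := `|t| - _ ; set a := `|t| => e0 ea ek t1 a0 k0.
clearbody e; clearbody a.
have H : (e * k%:R) * a <= 2 * a by nra.
have [a00|ap] := eqVneq a 0.
  have -> : e = 0 by rewrite a00 in ea; lra.
  by rewrite mul0r.
have ap' : 0 < a by rewrite lt_def ap a0.
by rewrite -(ler_pM2r ap').
Qed.
End SqrtApprox.


Section Cont.
Variables (R : realType) (T : topologicalType).
Implicit Types f g : T -> R.
Lemma cont_add f g : continuous f -> continuous g -> continuous (fun x => f x + g x).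
Proof. by move=> fc gc x; apply: cvgD; [exact: fc|exact: gc]. Qed.
Lemma cont_mul f g : continuous f -> continuous g -> continuous (fun x => f x * g x).
Proof. by move=> fc gc x; apply: cvgM; [exact: fc|exact: gc]. Qed.
Lemma cont_opp f : continuous f -> continuous (fun x => - f x).
Proof. by move=> fc x; apply: cvgN; exact: fc. Qed.
Lemma cont_cst (c : R) : continuous (fun _ : T => c).
Proof. by move=> x; exact: cvg_cst. Qed.
Lemma cont_norm f : continuous f -> continuous (fun x => `|f x|).
Proof. by move=> fc x; apply: cvg_norm; exact: fc. Qed.
Lemma cont_comp (S : topologicalType) (h : S -> T) f :
  continuous h -> continuous f -> continuous (fun x => f (h x)).
Proof. by move=> hc fc x; apply: continuous_comp; [exact: hc|exact: fc]. Qed.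
Lemma open_pos f : continuous f -> open [set x | 0 < f x].
Proof.
move=> fc.
have -> : [set x | 0 < f x] = f @^-1` [set r | r > 0] by [].
by apply: open_comp; [move=> x _; exact: fc|exact: open_gt].
Qed.
End Cont.


Section SW.
Variables (R : realType) (T : ptopologicalType) (A : set (T -> R)).
Hypotheses (Acst : forall c, A (fun _ => c))
 (Aadd : forall f g, A f -> A g -> A (fun x => f x + g x))
 (Ascl : forall c f, A f -> A (fun x => c * f x))
 (Amul : forall f g, A f -> A g -> A (fun x => f x * g x))
 (Acont : forall f, A f -> continuous f)
 (Abnd : forall f, A f -> exists M, forall x, `|f x| <= M).

Lemma Apoly q f : A f -> A (fun x => q.[f x]).
Proof.
move=> Af; elim/poly_ind: q => [|q c IH].
  have -> : (fun x => (0 : {poly R}).[f x]) = (fun _ => 0).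
    by apply/funext => x; rewrite horner0.
  exact: Acst.
have -> : (fun x => (q * 'X + c%:P).[f x]) = (fun x => q.[f x] * f x + c).
  by apply/funext => x; rewrite hornerMXaddC.
by apply: Aadd; [exact: Amul|exact: Acst].
Qed.

Variable C : set T.
Definition Abar g := forall eps, 0 < eps ->
  exists p, A p /\ forall x, C x -> `|g x - p x| < eps.

Lemma Abar_A f : A f -> Abar f.
Proof. by move=> Af eps e0; exists f; split => // x _; rewrite subrr normr0. Qed.

Lemma Abar_add g1 g2 : Abar g1 -> Abar g2 -> Abar (fun x => g1 x + g2 x).
Proof.
move=> A1 A2 eps e0.
have e2 : 0 < eps / 2 by lra.
have [p1 [Ap1 H1]] := A1 _ e2; have [p2 [Ap2 H2]] := A2 _ e2.
exists (fun x => p1 x + p2 x); split; first exact: Aadd.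
move=> x Cx; have := H1 x Cx; have := H2 x Cx.
have := ler_normD (g1 x - p1 x) (g2 x - p2 x).
have -> : g1 x - p1 x + (g2 x - p2 x) = g1 x + g2 x - (p1 x + p2 x) by ring.
lra.
Qed.

Lemma Abar_scl c g : Abar g -> Abar (fun x => c * g x).
Proof.
move=> Ag eps e0.
have c0 : 0 < `|c| + 1 by have := normr_ge0 c; lra.
have e2 : 0 < eps / (`|c| + 1) by apply: divr_gt0.
have [p [Ap H]] := Ag _ e2.
exists (fun x => c * p x); split; first exact: Ascl.
move=> x Cx; rewrite -mulrBr normrM.
have := H x Cx; have := normr_ge0 (g x - p x); have := normr_ge0 c.
move=> h1 h2 h3.
have : `|g x - p x| * (`|c| + 1) < eps by rewrite -ltr_pdivlMr.
nra.
Qed.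

Lemma Abar_abs g : Abar g -> Abar (fun x => `|g x|).
Proof.
move=> Ag eps e0.
have e2 : 0 < eps / 2 by lra.
have [p [Ap Hp]] := Ag _ e2.
have [M HM] := Abnd Ap.
pose M' := `|M| + 1.
have M'0 : 0 < M' by rewrite /M'; have := normr_ge0 M; lra.
have HM' : forall x, `|p x| <= M'.
  by move=> x; apply: (le_trans (HM x)); rewrite /M'; have := ler_norm M; lra.
have b0 : 0 <= 4 * M' / eps by apply: divr_ge0; lra.
pose k := Num.bound (4 * M' / eps).
have hk : 4 * M' / eps < k%:R by exact: archi_boundP.
have hk2 : 4 * M' < eps * k%:R by rewrite [eps * _]mulrC -ltr_pdivrMr.
exists (fun x => M' * (qs R k).[M'^-1 * p x]); split.
  by apply: Ascl; apply: Apoly; apply: Ascl.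
move=> x Cx.
set t := M'^-1 * p x.
have t1 : `|t| <= 1.
  rewrite /t normrM ger0_norm; last by rewrite invr_ge0 ltW.
  by rewrite ler_pdivrMl // mulr1.
have := qs_err k t1.
have pt : p x = M' * t by rewrite /t mulrA mulfV ?gt_eqF // mul1r.
have h1 := ler_dist_dist (g x) (p x).
have h2 := Hp x Cx.
have h3 : `| `|g x| - M' * (qs R k).[t] | <= `| `|g x| - `|p x| | + M' * `| `|t| - (qs R k).[t] |.
  have -> : `|g x| - M' * (qs R k).[t] = (`|g x| - `|p x|) + M' * (`|t| - (qs R k).[t]).
    by rewrite pt normrM (gtr0_norm M'0); ring.
  by rewrite (le_trans (ler_normD _ _)) // normrM (gtr0_norm M'0).
move: h3; set e := `| `|t| - _ | => h3 h4.
have e0' : 0 <= e by apply: normr_ge0.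
have : M' * e * 2 < eps.
  have k0 : 0 < k%:R :> R.
    apply: le_lt_trans hk; exact: b0.
  have : M' * e * 2 * k%:R <= 4 * M' by nra.
  move=> h5; have : M' * e * 2 * k%:R < eps * k%:R by lra.
  by rewrite ltr_pM2r.
lra.
Qed.

Lemma Abar_min g1 g2 : Abar g1 -> Abar g2 -> Abar (fun x => Num.min (g1 x) (g2 x)).
Proof.
move=> A1 A2.
have -> : (fun x => Num.min (g1 x) (g2 x)) =
  (fun x => 2^-1 * (g1 x + g2 x) + (- 2^-1) * `|(g1 x + (-1) * g2 x)|).
  by apply/funext => x; rewrite minr_absE mulN1r; ring.
apply: Abar_add; apply: Abar_scl => //; first exact: Abar_add.
by apply: Abar_abs; apply: Abar_add => //; apply: Abar_scl.
Qed.

Lemma Abar_max g1 g2 : Abar g1 -> Abar g2 -> Abar (fun x => Num.max (g1 x) (g2 x)).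
Proof.
move=> A1 A2.
have -> : (fun x => Num.max (g1 x) (g2 x)) =
  (fun x => 2^-1 * (g1 x + g2 x) + 2^-1 * `|(g1 x + (-1) * g2 x)|).
  by apply/funext => x; rewrite maxr_absE mulN1r; ring.
apply: Abar_add; apply: Abar_scl => //; first exact: Abar_add.
by apply: Abar_abs; apply: Abar_add => //; apply: Abar_scl.
Qed.

Definition Bset g := Abar g /\ continuous g.

Lemma B_min g1 g2 : Bset g1 -> Bset g2 -> Bset (fun x => Num.min (g1 x) (g2 x)).
Proof.
move=> [a1 c1] [a2 c2]; split; first exact: Abar_min.
by move=> x; apply: continuous_min; [exact: c1|exact: c2].
Qed.

Lemma B_max g1 g2 : Bset g1 -> Bset g2 -> Bset (fun x => Num.max (g1 x) (g2 x)).
Proof.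
move=> [a1 c1] [a2 c2]; split; first exact: Abar_max.
by move=> x; apply: continuous_max; [exact: c1|exact: c2].
Qed.

Lemma B_A f : A f -> Bset f.
Proof. by move=> Af; split; [exact: Abar_A|exact: Acont]. Qed.


Definition fmin {I : eqType} (g0 : T -> R) (h : I -> T -> R) (s : seq I) : T -> R :=
  foldr (fun i acc => fun z => Num.min (h i z) (acc z)) g0 s.
Definition fmax {I : eqType} (g0 : T -> R) (h : I -> T -> R) (s : seq I) : T -> R :=
  foldr (fun i acc => fun z => Num.max (h i z) (acc z)) g0 s.

Lemma fmin_B {I : eqType} (g0 : T -> R) (h : I -> T -> R) s : Bset g0 -> (forall i, i \in s -> Bset (h i)) -> Bset (fmin g0 h s).
Proof.
move=> B0; elim: s => [|i s IH] Hs //=.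
apply: B_min; first by apply: Hs; rewrite mem_head.
by apply: IH => j js; apply: Hs; rewrite in_cons js orbT.
Qed.

Lemma fmax_B {I : eqType} (g0 : T -> R) (h : I -> T -> R) s : Bset g0 -> (forall i, i \in s -> Bset (h i)) -> Bset (fmax g0 h s).
Proof.
move=> B0; elim: s => [|i s IH] Hs //=.
apply: B_max; first by apply: Hs; rewrite mem_head.
by apply: IH => j js; apply: Hs; rewrite in_cons js orbT.
Qed.

Lemma fmin_le {I : eqType} (g0 : T -> R) (h : I -> T -> R) s z i : i \in s -> fmin g0 h s z <= h i z.
Proof.
elim: s => [|j s IH] //=; rewrite in_cons => /orP [/eqP ->|iin].
  by rewrite ge_min lexx.
by rewrite ge_min IH ?orbT.
Qed.

Lemma fmin_eq {I : eqType} (g0 : T -> R) (h : I -> T -> R) s z v : g0 z = v -> (forall i, i \in s -> h i z = v) ->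
  fmin g0 h s z = v.
Proof.
move=> H0; elim: s => [|j s IH] //= Hs.
rewrite IH ?Hs ?mem_head ?minxx // => i iin; apply: Hs; by rewrite in_cons iin orbT.
Qed.

Lemma fmax_ge {I : eqType} (g0 : T -> R) (h : I -> T -> R) s z i : i \in s -> h i z <= fmax g0 h s z.
Proof.
elim: s => [|j s IH] //=; rewrite in_cons => /orP [/eqP ->|iin].
  by rewrite le_max lexx.
by rewrite le_max IH ?orbT.
Qed.

Lemma fmax_lt {I : eqType} (g0 : T -> R) (h : I -> T -> R) s z v : g0 z < v -> (forall i, i \in s -> h i z < v) ->
  fmax g0 h s z < v.
Proof.
move=> H0; elim: s => [|j s IH] //= Hs.
rewrite gt_max Hs ?mem_head //= IH // => i iin; apply: Hs; by rewrite in_cons iin orbT.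
Qed.

Theorem SW_main f : compact C -> continuous f ->
  (forall x y, C x -> C y -> exists h, A h /\ h x = f x /\ h y = f y) ->
  forall eps, 0 < eps -> exists p, A p /\ forall z, C z -> `|f z - p z| < eps.
Proof.
move=> Cc fc interp eps e0.
have [e [e0' ee]] : exists e, 0 < e /\ e + e = eps by exists (eps / 2); split; lra.
have step1 : forall x, C x -> exists g, Bset g /\ g x = f x /\
    forall z, C z -> g z < f z + e.
  move=> x Cx.
  have : forall y, exists h, A h /\ h x = f x /\ (C y -> h y = f y).
    move=> y; case: (pselect (C y)) => Cy.
      by have [h [Ah [h1 h2]]] := interp x y Cx Cy; exists h.
    by exists (fun _ => f x); split; [exact: Acst|split].
  move=> /choice [H HH].
  pose U y := [set z | 0 < f z + e - H y z].
  have Uo : forall y, C y -> open (U y).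
    move=> y _; apply: open_pos.
    have [Ah _] := HH y.
    apply: cont_add; last by apply: cont_opp; exact: Acont.
    by apply: cont_add => //; exact: cont_cst.
  have cov : C `<=` cover C U.
    move=> y Cy; exists y => //; have [_ [_ Hy]] := HH y; rewrite /U /= Hy //.
    lra.
  have := Cc; rewrite compact_cover => /(_ T C U Uo cov) [D sD covD].
  exists (fmin (fun _ => f x) H D); split.
    apply: fmin_B; first exact: B_A (Acst _).
    by move=> i _; apply: B_A; have [] := HH i.
  split.
    by apply: fmin_eq => // i _; have [_ []] := HH i.
  move=> z Cz; have [i Di Uiz] := covD z Cz.
  have := fmin_le (fun _ => f x) H z Di.
  by rewrite /U /= in Uiz; lra.
case: (pselect (exists x0, C x0)) => [[x0 Cx0]|nC]; last first.
  exists (fun _ => 0); split; first exact: Acst.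
  by move=> z Cz; exfalso; apply: nC; exists z.
have : forall x, exists g, Bset g /\
    (C x -> g x = f x /\ forall z, C z -> g z < f z + e).
  move=> x; case: (pselect (C x)) => Cx.
    by have [g [Bg [g1 g2]]] := step1 x Cx; exists g.
  by exists (fun _ => 0); split => //; exact: B_A (Acst 0).
move=> /choice [G HG].
pose V x := [set z | 0 < G x z - f z + e].
have Vo : forall x, C x -> open (V x).
  move=> x _; apply: open_pos.
  have [[_ Gc] _] := HG x.
  apply: cont_add; last exact: cont_cst.
  by apply: cont_add => //; apply: cont_opp.
have cov : C `<=` cover C V.
  move=> x Cx; exists x => //; have [_ /(_ Cx) [Hx _]] := HG x; rewrite /V /= Hx.
  lra.
have := Cc; rewrite compact_cover => /(_ T C V Vo cov) [D sD covD].
pose F := fmax (G x0) G D.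
have BF : Bset F.
  apply: fmax_B; first by have [] := HG x0.
  by move=> i _; have [] := HG i.
have HF : forall z, C z -> `|f z - F z| < e.
  move=> z Cz.
  have up : F z < f z + e.
    apply: fmax_lt; first by have [_ /(_ Cx0) [_ ->]] := HG x0.
    move=> i Di; have := sD i Di; rewrite inE => Ci.
    by have [_ /(_ Ci) [_ ->]] := HG i.
  have [i Di Viz] := covD z Cz.
  have := fmax_ge (G x0) G z Di; rewrite /V /= in Viz.
  rewrite -/F => lo.
  rewrite ltr_norml; apply/andP; split; lra.
have [p [Ap Hp]] := BF.1 e e0'.
exists p; split => // z Cz; have := HF z Cz; have := Hp z Cz.
have := ler_normD (f z - F z) (F z - p z).
have -> : f z - F z + (F z - p z) = f z - p z by ring.
lra.
Qed.
End SW.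


Section Dot.
Variables (R : realType) (n : nat).
Implicit Types u v w : 'cV[R]_n.
Lemma dotvDl w1 w2 u : dotv (w1 + w2) u = dotv w1 u + dotv w2 u.
Proof. by rewrite /dotv -big_split /=; apply: eq_bigr => i _; rewrite !mxE mulrDl. Qed.
Lemma dotvNl w u : dotv (- w) u = - dotv w u.
Proof. by rewrite /dotv -sumrN; apply: eq_bigr => i _; rewrite !mxE mulNr. Qed.
Lemma dotvBl w1 w2 u : dotv (w1 - w2) u = dotv w1 u - dotv w2 u.
Proof. by rewrite dotvDl dotvNl. Qed.
Lemma dotvDr w u v : dotv w (u + v) = dotv w u + dotv w v.
Proof. by rewrite /dotv -big_split /=; apply: eq_bigr => i _; rewrite !mxE mulrDr. Qed.
Lemma dotvNr w u : dotv w (- u) = - dotv w u.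
Proof. by rewrite /dotv -sumrN; apply: eq_bigr => i _; rewrite !mxE mulrN. Qed.
Lemma dotvBr w u v : dotv w (u - v) = dotv w u - dotv w v.
Proof. by rewrite dotvDr dotvNr. Qed.
Lemma dotv0l u : dotv 0 u = 0.
Proof. by rewrite /dotv big1 // => i _; rewrite mxE mul0r. Qed.
Lemma dotvZl c w u : dotv (c *: w) u = c * dotv w u.
Proof. by rewrite /dotv mulr_sumr; apply: eq_bigr => i _; rewrite !mxE mulrA. Qed.
Lemma dotv_sq_gt0 u : u != 0 -> 0 < dotv u u.
Proof.
move=> u0; rewrite lt_def; apply/andP; split; last first.
  by apply: sumr_ge0 => i _; rewrite -expr2 sqr_ge0.
apply/eqP => /eqP; rewrite /dotv psumr_eq0; last by move=> i _; rewrite -expr2 sqr_ge0.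
move=> /allP H; move/eqP: u0; apply; apply/matrixP => i j.
rewrite (ord1 j) mxE; have := H i (mem_index_enum _).
by rewrite /= mulf_eq0 orbb => /eqP.
Qed.
End Dot.

Section Cont2.
Variables (R : realType) (T : topologicalType).
Lemma cont_sum (I : Type) (r : seq I) (F : I -> T -> R) :
  (forall i, continuous (F i)) -> continuous (fun x => \sum_(i <- r) F i x).
Proof.
move=> Fc; elim: r => [|i r IH].
  under eq_fun do rewrite big_nil; exact: cont_cst.
under eq_fun do rewrite big_cons; exact: cont_add.
Qed.

Lemma cont_mx a b (F : T -> 'M[R]_(a, b)) :
  (forall i j, continuous (fun x => F x i j)) -> continuous F.
Proof.
move=> Fc x S [P hP sub].
apply: (filterS (P := [set y | forall i j, P i j (F y i j)])).
  by move=> y Hy; apply: sub.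
apply: filter_forall => i; apply: filter_forall => j.
exact: (Fc i j x (P i j) (hP i j)).
Qed.
End Cont2.

Section Trig.
Variables (R : realType) (n : nat).
Local Notation V := 'cV[R]_(n + n).
Definition phi (z : V) : 'cV[R]_n := usubmx z - dsubmx z.
Definition swap (z : V) : V := col_mx (dsubmx z) (usubmx z).

Lemma phi_swap z : phi (swap z) = - phi z.
Proof. by rewrite /phi /swap col_mxKu col_mxKd opprB. Qed.

Lemma phi_col x y : phi (col_mx x y) = x - y.
Proof. by rewrite /phi col_mxKu col_mxKd. Qed.

Lemma swap_col x y : swap (col_mx x y) = col_mx y x.
Proof. by rewrite /swap col_mxKu col_mxKd. Qed.

Inductive trig : (V -> R) -> Prop :=
| Tcos w : trig (fun z => cos (dotv w (phi z)))
| Tsin w : trig (fun z => sin (dotv w (phi z)))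
| Tadd f g : trig f -> trig g -> trig (fun z => f z + g z)
| Tscl c f : trig f -> trig (fun z => c * f z).

Lemma dotv_phi_cont w : continuous (fun z : V => dotv w (phi z)).
Proof.
have -> : (fun z : V => dotv w (phi z)) =
   (fun z => \sum_(i < n) (w i ord0 * (z (lshift n i) ord0 + - z (rshift n i) ord0))).
  by apply/funext => z; apply: eq_bigr => i _; rewrite !mxE.
apply: cont_sum => i; apply: cont_mul; first exact: cont_cst.
by apply: cont_add; [|apply: cont_opp]; apply: coord_continuous.
Qed.

Lemma trig_cont f : trig f -> continuous f.
Proof.
elim => [w|w|f1 f2 _ c1 _ c2|c f1 _ c1].
- exact: (@cont_comp R _ _ (fun z => dotv w (phi z)) (@cos R) (@dotv_phi_cont w) (@continuous_cos R)).
- exact: (@cont_comp R _ _ (fun z => dotv w (phi z)) (@sin R) (@dotv_phi_cont w) (@continuous_sin R)).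
- exact: cont_add.
- by apply: cont_mul => //; exact: cont_cst.
Qed.

Lemma trig_bnd f : trig f -> exists M, forall x, `|f x| <= M.
Proof.
elim => [w|w|f1 f2 _ [M1 H1] _ [M2 H2]|c f1 _ [M1 H1]].
- by exists 1 => x; rewrite ler_norml cos_le1 andbT cos_geN1.
- by exists 1 => x; rewrite ler_norml sin_le1 andbT sin_geN1.
- exists (M1 + M2) => x; apply: le_trans (ler_normD _ _) _.
  by apply: lerD.
- exists (`|c| * M1) => x; rewrite normrM; apply: ler_wpM2l => //.
Qed.

Lemma trig_cst c : trig (fun _ => c).
Proof.
have -> : (fun _ : V => c) = (fun z => c * cos (dotv 0 (phi z))).
  by apply/funext => z; rewrite dotv0l cos0 mulr1.
by apply: Tscl; apply: Tcos.
Qed.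

Lemma trig_sub f g : trig f -> trig g -> trig (fun z => f z - g z).
Proof.
move=> tf tg; have -> : (fun z => f z - g z) = (fun z => f z + (-1) * g z).
  by apply/funext => z; rewrite mulN1r.
by apply: Tadd => //; apply: Tscl.
Qed.

Lemma trig_half f g : trig f -> trig g -> trig (fun z => (f z + g z) / 2).
Proof.
move=> tf tg; have -> : (fun z => (f z + g z) / 2) = (fun z => 2^-1 * (f z + g z)).
  by apply/funext => z; rewrite mulrC.
by apply: Tscl; apply: Tadd.
Qed.

Lemma trig_halfB f g : trig f -> trig g -> trig (fun z => (f z - g z) / 2).
Proof.
move=> tf tg; have -> : (fun z => (f z - g z) / 2) = (fun z => 2^-1 * (f z - g z)).
  by apply/funext => z; rewrite mulrC.
by apply: Tscl; apply: trig_sub.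
Qed.

Lemma trig_gen_mul (b1 b2 : bool) w1 w2 :
  trig (fun z => (if b1 then cos else sin) (dotv w1 (phi z)) *
                 (if b2 then cos else sin) (dotv w2 (phi z))).
Proof.
case: b1; case: b2.
- have -> : (fun z => cos (dotv w1 (phi z)) * cos (dotv w2 (phi z))) =
     (fun z => (cos (dotv (w1 - w2) (phi z)) + cos (dotv (w1 + w2) (phi z))) / 2).
    apply/funext => z; rewrite dotvBl dotvDl cosB cosD; by field.
  exact: (trig_half (Tcos (w1 - w2)) (Tcos (w1 + w2))).
- have -> : (fun z => cos (dotv w1 (phi z)) * sin (dotv w2 (phi z))) =
     (fun z => (sin (dotv (w1 + w2) (phi z)) - sin (dotv (w1 - w2) (phi z))) / 2).
    apply/funext => z; rewrite dotvBl dotvDl sinB sinD; by field.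
  exact: (trig_halfB (Tsin (w1 + w2)) (Tsin (w1 - w2))).
- have -> : (fun z => sin (dotv w1 (phi z)) * cos (dotv w2 (phi z))) =
     (fun z => (sin (dotv (w1 + w2) (phi z)) + sin (dotv (w1 - w2) (phi z))) / 2).
    apply/funext => z; rewrite dotvBl dotvDl sinB sinD; by field.
  exact: (trig_half (Tsin (w1 + w2)) (Tsin (w1 - w2))).
- have -> : (fun z => sin (dotv w1 (phi z)) * sin (dotv w2 (phi z))) =
     (fun z => (cos (dotv (w1 - w2) (phi z)) - cos (dotv (w1 + w2) (phi z))) / 2).
    apply/funext => z; rewrite dotvBl dotvDl cosB cosD; by field.
  exact: (trig_halfB (Tcos (w1 - w2)) (Tcos (w1 + w2))).
Qed.

Lemma trig_gen_mul_l (b : bool) w g : trig g ->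
  trig (fun z => (if b then cos else sin) (dotv w (phi z)) * g z).
Proof.
elim => [w2|w2|f1 f2 _ t1 _ t2|c f1 _ t1].
- exact: (trig_gen_mul b true w w2).
- exact: (trig_gen_mul b false w w2).
- have -> : (fun z => (if b then cos else sin) (dotv w (phi z)) * (f1 z + f2 z)) =
    (fun z => (if b then cos else sin) (dotv w (phi z)) * f1 z +
              (if b then cos else sin) (dotv w (phi z)) * f2 z).
    by apply/funext => z; rewrite mulrDr.
  exact: Tadd.
- have -> : (fun z => (if b then cos else sin) (dotv w (phi z)) * (c * f1 z)) =
    (fun z => c * ((if b then cos else sin) (dotv w (phi z)) * f1 z)).
    by apply/funext => z; rewrite mulrCA.
  exact: Tscl.
Qed.

Lemma trig_mul f g : trig f -> trig g -> trig (fun z => f z * g z).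
Proof.
move=> tf tg; elim: tf => [w|w|f1 f2 _ t1 _ t2|c f1 _ t1].
- exact: (trig_gen_mul_l true w tg).
- exact: (trig_gen_mul_l false w tg).
- have -> : (fun z => (f1 z + f2 z) * g z) = (fun z => f1 z * g z + f2 z * g z).
    by apply/funext => z; rewrite mulrDl.
  exact: Tadd.
- have -> : (fun z => (c * f1 z) * g z) = (fun z => c * (f1 z * g z)).
    by apply/funext => z; rewrite mulrA.
  exact: Tscl.
Qed.

Lemma trig_sep (x y : V) : phi x <> phi y ->
  exists P, trig P /\ P x <> P y.
Proof.
move=> nxy.
set u := phi x - phi y.
have u0 : u != 0 by rewrite subr_eq0; apply/eqP.
have d0 := dotv_sq_gt0 u0.
pose w := (pi / dotv u u) *: u.
have hw : dotv w (phi x) = dotv w (phi y) + pi.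
  have : dotv w u = pi by rewrite /w dotvZl mulfVK ?gt_eqF.
  by rewrite /u dotvBr => <-; ring.
case: (boolP (cos (dotv w (phi x)) == cos (dotv w (phi y)))) => [/eqP hc|hc]; last first.
  by exists (fun z => cos (dotv w (phi z))); split; [exact: Tcos|apply/eqP].
case: (boolP (sin (dotv w (phi x)) == sin (dotv w (phi y)))) => [/eqP hs|hs]; last first.
  by exists (fun z => sin (dotv w (phi z))); split; [exact: Tsin|apply/eqP].
exfalso.
move: hc hs; rewrite hw cosDpi sinDpi => hc hs.
have c0 : cos (dotv w (phi y)) = 0 by lra.
have s0 : sin (dotv w (phi y)) = 0 by lra.
have := cos2Dsin2 (dotv w (phi y)); rewrite c0 s0 expr0n /= addr0 => /eqP.
by rewrite eq_sym oner_eq0.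
Qed.
End Trig.


Section Final.
Variables (R : realType) (n : nat).
Local Notation V := 'cV[R]_(n + n).

Lemma OmegaS_mul (w : 'cV[R]_n) (z : V) :
  OmegaS_mx w *m z = col_mx (w^T *m usubmx z) (- (w^T *m dsubmx z)).
Proof.
by rewrite -{1}(vsubmxK z) /OmegaS_mx mul_block_col !mul0mx addr0 add0r mulNmx.
Qed.

Lemma trmx_dot (w u : 'cV[R]_n) : (w^T *m u) ord0 ord0 = dotv w u.
Proof. by rewrite !mxE; apply: eq_bigr => j _; rewrite mxE. Qed.

Lemma MO_gen (b : bool) (w : 'cV[R]_n) :
  M_OmegaS (fun z : V => (if b then cos else sin) (dotv w (phi z))).
Proof.
exists 1%N, (fun _ => 1), (fun _ => OmegaS_mx w),
  (fun _ => fun v : 'cV[R]_(1 + 1) =>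
     (if b then cos else sin) (v (lshift 1 ord0) ord0 + v (rshift 1 ord0) ord0)).
split; first by move=> _; exists w.
split.
  move=> _; apply: (@cont_comp R _ _ (fun v : 'cV[R]_(1 + 1) => v (lshift 1 ord0) ord0 + v (rshift 1 ord0) ord0)).
    by apply: cont_add; apply: coord_continuous.
  by case: b; [exact: continuous_cos|exact: continuous_sin].
apply/funext => z; rewrite big_ord1 mul1r OmegaS_mul col_mxEu col_mxEd trmx_dot mxE trmx_dot.
by rewrite /phi dotvBr.
Qed.

Lemma MO_scl c f : M_OmegaS f -> M_OmegaS (fun z : V => c * f z).
Proof.
move=> [m [c0 [A0 [g0 [HA [Hg ->]]]]]].
exists m, (fun i => c * c0 i), A0, g0; split => //; split => //.
by apply/funext => z; rewrite mulr_sumr; apply: eq_bigr => i _; rewrite mulrA.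
Qed.

Lemma MO_add f1 f2 : M_OmegaS f1 -> M_OmegaS f2 -> M_OmegaS (fun z : V => f1 z + f2 z).
Proof.
move=> [m1 [c1 [A1 [g1 [HA1 [Hg1 ->]]]]]] [m2 [c2 [A2 [g2 [HA2 [Hg2 ->]]]]]].
exists (m1 + m2)%N,
  (fun i => match fintype.split i with inl a => c1 a | inr b => c2 b end),
  (fun i => match fintype.split i with inl a => A1 a | inr b => A2 b end),
  (fun i => match fintype.split i with inl a => g1 a | inr b => g2 b end).
split; first by move=> i; case: (fintype.split i).
split; first by move=> i; case: (fintype.split i).
apply/funext => z; rewrite big_split_ord /=.
have sl : forall i : 'I_m1, fintype.split (lshift m2 i) = inl i := fun i => unsplitK (inl i).
have sr : forall i : 'I_m2, fintype.split (rshift m1 i) = inr i := fun i => unsplitK (inr i).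
by congr (_ + _); apply: eq_bigr => i _; rewrite ?sl ?sr.
Qed.

Lemma trig_MO (f : V -> R) : trig f -> M_OmegaS f.
Proof.
elim => [w|w|f1 f2 _ t1 _ t2|c f1 _ t1].
- exact: (MO_gen true w).
- exact: (MO_gen false w).
- exact: MO_add.
- exact: MO_scl.
Qed.

Lemma trig_even (f : V -> R) : trig f -> exists s : seq (R * 'cV[R]_n),
  forall z : V, (f z + f (swap z)) / 2 = \sum_(q <- s) q.1 * cos (dotv q.2 (phi z)).
Proof.
elim => [w|w|f1 f2 _ [s1 H1] _ [s2 H2]|c f1 _ [s1 H1]].
- exists [:: (1, w)] => z; rewrite big_cons big_nil /= phi_swap dotvNr cosN.
  by rewrite mul1r addr0; field; done.
- exists [::] => z; rewrite big_nil phi_swap dotvNr sinN; by field.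
- exists (s1 ++ s2) => z; rewrite big_cat /= -H1 -H2; by field.
- exists [seq (c * q.1, q.2) | q <- s1] => z; rewrite big_map /=.
  under eq_bigr do rewrite -mulrA; rewrite -mulr_sumr -H1; by field.
Qed.

Lemma swap_cont : continuous (@swap R n).
Proof.
pose S : 'M[R]_(n + n) := block_mx 0 1%:M 1%:M 0.
have swS : @swap R n = fun z => S *m z.
  apply/funext => z; rewrite -{2}(vsubmxK z) /S mul_block_col !mul0mx !mul1mx.
  by rewrite addr0 add0r.
rewrite swS; apply: cont_mx => i j.
under eq_fun do rewrite mxE.
apply: cont_sum => l; apply: cont_mul; first exact: cont_cst.
exact: coord_continuous.
Qed.
End Final.

Unset Implicit Arguments.


Theorem theorem5p1 (R : realType) (n : nat) (k : 'cV[R]_(n + n) -> R) :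
  (0 < n)%N ->
  continuous k ->
  (exists kt : 'cV[R]_n -> R, continuous kt /\
     forall x y : 'cV[R]_n, k (col_mx x y) = kt (x - y)) ->
  in_compact_closure (@M_OmegaS R n) k /\
  ((forall x y : 'cV[R]_n, k (col_mx x y) = k (col_mx y x)) ->
   forall (K : set 'cV[R]_(n + n)) (eps : R), compact K -> 0 < eps ->
   exists (M1 M2 : nat) (c : 'I_M1 -> R) (w : 'I_M1 -> 'cV[R]_n) (t : 'I_M2 -> R),
     (0 < M1)%N /\ (0 < M2)%N /\
     forall x y : 'cV[R]_n, K (col_mx x y) ->
       `| k (col_mx x y) -
          \sum_(j < M1) \sum_(l < M2)
             c j / M2%:R * cos (dotv (w j) x + t l) * cos (dotv (w j) y + t l) | < eps).
Proof.
move=> _ kc [kt [ktc hk]].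
have kphi : forall z, k z = kt (phi z).
  by move=> z; rewrite -{1}(vsubmxK z) hk.
have interp : forall (C : set 'cV[R]_(n + n)) x y, C x -> C y ->
    exists h, trig h /\ h x = k x /\ h y = k y.
  move=> C x y _ _; case: (pselect (phi x = phi y)) => e.
    exists (fun _ => k x); split; first exact: trig_cst.
    by split => //; rewrite !kphi e.
  have [P [tP nP]] := trig_sep e.
  have nP' : P x - P y != 0 by rewrite subr_eq0; apply/eqP.
  pose be := (k x - k y) / (P x - P y).
  exists (fun z => (k x - be * P x) + be * P z); split.
    by apply: Tadd; [exact: trig_cst|exact: Tscl].
  split; first ring.
  rewrite /be; field => //.
have SWk : forall C, compact C -> forall eps, 0 < eps ->
    exists p, trig p /\ forall z, C z -> `|k z - p z| < eps.
  move=> C Cc eps e0.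
  exact: (SW_main (@trig_cst R n) (@Tadd R n) (@Tscl R n) (@trig_mul R n)
    (@trig_cont R n) (@trig_bnd R n) Cc kc (interp C) e0).
split.
  move=> K eps Kc e0; have [p [tp Hp]] := SWk K Kc eps e0.
  by exists p; split => //; exact: trig_MO.
move=> ksym K eps Kc e0.
pose K' := K `|` (@swap R n) @` K.
have K'c : compact K'.
  by apply: compactU => //; apply: continuous_compact => //;
    exact: continuous_subspaceT (@swap_cont R n).
have [p [tp Hp]] := SWk K' K'c eps e0.
have [s Hs] := trig_even tp.
pose s' := (0, 0) :: s.
exists (size s'), 2%N, (fun j => 2 * (nth (0,0) s' j).1), (fun j => (nth (0,0) s' j).2),
  (fun l => (val l)%:R * (pi / 2)).
split => //; split => //.
move=> x y Kxy.
have Hsum : forall j : 'I_(size s'),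
  \sum_(l < 2) 2 * (nth (0,0) s' j).1 / 2%:R *
     cos (dotv (nth (0,0) s' j).2 x + (val l)%:R * (pi / 2)) *
     cos (dotv (nth (0,0) s' j).2 y + (val l)%:R * (pi / 2)) =
  (nth (0,0) s' j).1 * cos (dotv (nth (0,0) s' j).2 (phi (col_mx x y))).
  move=> j; rewrite !big_ord_recl big_ord0 /= phi_col dotvBr cosB.
  rewrite mul0r !addr0 mul1r !cosDpihalf.
  by field.
rewrite (eq_bigr _ (fun j _ => Hsum j)).
rewrite -(big_mkord xpredT (fun j => (nth (0,0) s' j).1 * cos (dotv (nth (0,0) s' j).2 (phi (col_mx x y))))).
rewrite -(big_nth (0,0) xpredT (fun q => q.1 * cos (dotv q.2 (phi (col_mx x y))))).
rewrite big_cons /= mul0r add0r -Hs.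
set z := col_mx x y.
have h1 := Hp z (or_introl Kxy).
have h2 := Hp (swap z) (or_intror (ex_intro2 _ _ z Kxy erefl)).
have ksz : k (swap z) = k z by rewrite /z swap_col ksym.
rewrite ksz in h2.
have -> : k z - (p z + p (swap z)) / 2 = ((k z - p z) + (k z - p (swap z))) / 2 by field.
rewrite normrM normfV (ger0_norm (ler0n _ 2)).
have := ler_normD (k z - p z) (k z - p (swap z)).
lra.
Qed.
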